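(* Let $(X,\phi)$ be a flow on a compact metric space $(X,d)$. For every $\epsilon>0$ the limit $\lim_{t\to\infty}\frac1t\log\#(\phi,X,d_t,\epsilon)$ exists, and \begin{align*} \overline{\mathrm{mdim}}_M(\phi,X,d)&=\limsup_{\epsilon\to0}\lim_{t\to\infty}\frac{\log\#(\phi,X,d_t,\epsilon)}{t\log\frac1\epsilon}=\limsup_{\epsilon\to0}\limsup_{t\to\infty}\frac{\log s_t(\phi,X,d,\epsilon)}{t\log\frac1\epsilon},\\ \underline{\mathrm{mdim}}_M(\phi,X,d)&=\liminf_{\epsilon\to0}\lim_{t\to\infty}\frac{\log\#(\phi,X,d_t,\epsilon)}{t\log\frac1\epsilon}=\liminf_{\epsilon\to0}\limsup_{t\to\infty}\frac{\log s_t(\phi,X,d,\epsilon)}{t\log\frac1\epsilon}. \end{align*}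
   Context: A flow: $\phi:X\times\mathbb{R}\to X$ continuous, $\phi_t(x)=\phi(x,t)$, $\phi_0=\mathrm{id}$, $\phi_{t+s}=\phi_t\circ\phi_s$. $d_t(x,y)=\max_{s\in[0,t]}d(\phi_sx,\phi_sy)$. $\#(\phi,X,d_t,\epsilon)$ is the minimal cardinality of an open cover of $X$ each of whose members has $d_t$-diameter less than $\epsilon$. $s_t(\phi,X,d,\epsilon)$ is the maximal cardinality of a set $F\subset X$ with $d_t(x,y)\ge\epsilon$ for all distinct $x,y\in F$. $r_t(\phi,X,d,\epsilon)$ is the minimal cardinality of $E\subset X$ such that every $x\in X$ has $y\in E$ with $d_t(x,y)<\epsilon$; $r(\phi,X,d,\epsilon)=\limsup_{t\to\infty}\frac1t\log r_t(\phi,X,d,\epsilon)$; $\overline{\mathrm{mdim}}_M(\phi,X,d)=\limsup_{\epsilon\to0}\frac{r(\phi,X,d,\epsilon)}{\log(1/\epsilon)}$ and $\underline{\mathrm{mdim}}_M$ is the same with $\liminf_{\epsilon\to0}$. *)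

(* Defs.v *)
From HB Require Import structures.
From mathcomp Require Import all_boot all_order all_algebra.
From mathcomp Require Import all_classical all_reals all_analysis.
Set Implicit Arguments. Unset Strict Implicit. Unset Printing Implicit Defensive.
Import Order.TTheory GRing.Theory Num.Theory.
Import numFieldNormedType.Exports.
Local Open Scope classical_set_scope.
Local Open Scope ring_scope.

Section FlowDefs.
Variables (R : realType) (X : Type).
Implicit Types (d : X -> X -> R) (phi : X -> R -> X).

Definition is_metric d : Prop :=
  [/\ forall x y, d x y = 0 <-> x = y,
      forall x y, d x y = d y x &
      forall x y z, d x z <= d x y + d y z].

Definition metric_open d (U : set X) : Prop :=
  forall x, U x -> exists2 r : R, 0 < r & forall y, d x y < r -> U y.

Definition metric_compact d : Prop :=
  forall (I : Type) (U : I -> set X),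
    (forall i, metric_open d (U i)) -> (forall x, exists i, U i x) ->
    exists (n : nat) (f : 'I_n -> I), forall x, exists k, U (f k) x.

(* phi is a (continuous) flow on (X,d): phi x t = phi_t(x) *)
Definition is_flow d phi : Prop :=
  [/\ (forall x t (e : R), 0 < e -> exists2 del : R, 0 < del &
         forall y s, d x y < del -> `|t - s| < del -> d (phi x t) (phi y s) < e),
      (forall x, phi x 0 = x) &
      (forall x t s, phi x (t + s) = phi (phi x s) t)].

Definition dist_t d phi (t : R) (x y : X) : R :=
  sup [set d (phi x s) (phi y s) | s in [set s : R | 0 <= s <= t]].

(* d_t-diameter of U (as an extended real; -oo for the empty set) *)
Definition diam_t d phi (t : R) (U : set X) : \bar R :=
  ereal_sup [set e : \bar R | exists x y, [/\ U x, U y & e = (dist_t d phi t x y)%:E]].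

Definition cover_num d phi (t eps : R) : R :=
  inf [set n%:R | n in [set n : nat | exists U : 'I_n -> set X,
        [/\ forall i, metric_open d (U i),
            forall x, exists i, U i x &
            forall i, (diam_t d phi t (U i) < eps%:E)%E]]].

Definition sep_num d phi (t eps : R) : R :=
  sup [set n%:R | n in [set n : nat | exists F : 'I_n -> X,
        injective F /\ forall i j, i != j -> eps <= dist_t d phi t (F i) (F j)]].

Definition span_num d phi (t eps : R) : R :=
  inf [set n%:R | n in [set n : nat | exists E : 'I_n -> X,
        forall x, exists i, dist_t d phi t x (E i) < eps]].

Definition span_rate d phi (eps : R) : \bar R :=
  limf_esup (fun t : R => (ln (span_num d phi t eps) / t)%:E) +oo.

Definition upper_mdim_M d phi : \bar R :=
  limf_esup (fun eps : R => (span_rate d phi eps * (ln (1 / eps))^-1%:E)%E) 0^'+.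

Definition lower_mdim_M d phi : \bar R :=
  limf_einf (fun eps : R => (span_rate d phi eps * (ln (1 / eps))^-1%:E)%E) 0^'+.

End FlowDefs.

(* Main.v *)
Require Import Defs.
From HB Require Import structures.
From mathcomp Require Import all_boot all_order all_algebra.
From mathcomp Require Import all_classical all_reals all_analysis.
From mathcomp Require Import ring lra.
Import Order.TTheory GRing.Theory Num.Theory.
Import numFieldNormedType.Exports.
Local Open Scope classical_set_scope.
Local Open Scope ring_scope.
Section P1.
Variable R : realType.
Local Open Scope ereal_scope.

Lemma near0P (P : R -> Prop) : (\forall e \near 0%R^'+, P e) <->
  exists2 del : R, (0 < del)%R & forall e, (0 < e < del)%R -> P e.
Proof.
split.
- move=> /nbhs_ballP [del /= del0 H]; exists del => // e /andP[e0 ed]; apply: H => //.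
  by rewrite /ball /= sub0r normrN gtr0_norm.
- move=> [del del0 H]; apply/nbhs_ballP; exists del => //= e; rewrite /ball /= sub0r normrN => h e0.
  by apply: H; rewrite e0 /= -(gtr0_norm e0).
Qed.

Lemma near0_scale (P : R -> Prop) (c : R) : (0 < c)%R ->
  (\forall e \near 0%R^'+, P e) -> \forall e \near 0%R^'+, P (e * c)%R.
Proof.
move=> c0 /near0P [del del0 H]; apply/near0P; exists (del / c)%R.
  by rewrite divr_gt0.
move=> e /andP[e0 ed]; apply: H; rewrite mulr_gt0 //=.
by rewrite -ltr_pdivlMr.
Qed.

Lemma limf_esup_le (F : set_system R) (FF : Filter F) (f g : R -> \bar R) :
  (\forall x \near F, f x <= g x) -> limf_esup f F <= limf_esup g F.
Proof.
move=> W; rewrite !limf_esupE; apply: le_ereal_inf_tmp => _ [V FV <-].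
have FVW : F (V `&` [set x | f x <= g x]) by apply: filterI.
apply: (@le_trans _ _ (ereal_sup (f @` (V `&` [set x | f x <= g x])))).
  by apply: ereal_inf_lbound; exists (V `&` [set x | f x <= g x]).
apply: ge_ereal_sup => _ [x [Vx fg] <-].
apply: le_trans fg _; apply: ereal_sup_ubound; by exists x.
Qed.

Lemma limf_einf_le (F : set_system R) (FF : Filter F) (f g : R -> \bar R) :
  (\forall x \near F, f x <= g x) -> limf_einf f F <= limf_einf g F.
Proof.
move=> W; rewrite !limf_einfE; apply: ge_ereal_sup => _ [V FV <-].
have FVW : F (V `&` [set x | f x <= g x]) by apply: filterI.
apply: (@le_trans _ _ (ereal_inf (g @` (V `&` [set x | f x <= g x])))); last first.
  by apply: ereal_sup_ubound; exists (V `&` [set x | f x <= g x]).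
apply: le_ereal_inf_tmp => _ [x [Vx fg] <-].
apply: le_trans fg; apply: ereal_inf_lbound; by exists x.
Qed.

Lemma limf_esupZ (F : set_system R) (f : R -> \bar R) (k : R) : (0 < k)%R ->
  limf_esup (fun x => k%:E * f x) F = k%:E * limf_esup f F.
Proof.
move=> k0; rewrite !limf_esupE.
have -> : [set ereal_sup ((fun x => k%:E * f x) @` V) | V in F] =
  [set k%:E * y | y in [set ereal_sup (f @` V) | V in F]].
  rewrite [in RHS]image_comp; apply: eq_imagel => V _ /=.
  by rewrite -ereal_sup_pZl // image_comp.
by rewrite ereal_inf_pZl.
Qed.

Lemma limf_einfZ (F : set_system R) (f : R -> \bar R) (k : R) : (0 < k)%R ->
  limf_einf (fun x => k%:E * f x) F = k%:E * limf_einf f F.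
Proof.
move=> k0; rewrite !limf_einfE.
have -> : [set ereal_inf ((fun x => k%:E * f x) @` V) | V in F] =
  [set k%:E * y | y in [set ereal_inf (f @` V) | V in F]].
  rewrite [in RHS]image_comp; apply: eq_imagel => V _ /=.
  by rewrite -ereal_inf_pZl // image_comp.
by rewrite ereal_sup_pZl.
Qed.

Lemma limf_esup_cvg (F : set_system R) (FF : ProperFilter F) (f : R -> R) (l : R) :
  f @ F --> l -> limf_esup (fun x => (f x)%:E) F = l%:E.
Proof.
move=> fl; apply/eqP; rewrite eq_le; apply/andP; split.
- apply/lee_addgt0Pr => e e0.
  have W : \forall x \near F, (`|l - f x| < e)%R by apply: cvgr_dist_lt.
  rewrite limf_esupE.
  apply: (@le_trans _ _ (ereal_sup ((fun x => (f x)%:E) @` [set x | `|l - f x| < e]%R)));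
    first by apply: ereal_inf_lbound; exists [set x | `|l - f x| < e]%R.
  apply: ge_ereal_sup => _ [x /= lx <-]; rewrite -EFinD lee_fin.
  move: lx; rewrite distrC ltr_distl => /andP[_ /ltW]; by rewrite addrC.
- rewrite limf_esupE; apply: le_ereal_inf_tmp => _ [V FV <-].
  apply/lee_addgt0Pr => e e0.
  have W : \forall x \near F, (`|l - f x| < e)%R by apply: cvgr_dist_lt.
  have [x [Vx lx]] := filter_ex (filterI FV W).
  apply: (@le_trans _ _ ((f x)%:E + e%:E)).
    rewrite -EFinD lee_fin; move: lx; rewrite ltr_distl => /andP[_ /ltW //].
  by rewrite leeD2r //; apply: ereal_sup_ubound; exists x.
Qed.

Lemma esup_scale0 (g : R -> \bar R) (c : R) : (0 < c)%R ->
  limf_esup (fun e : R => g (e * c)%R) 0%R^'+ <= limf_esup g 0%R^'+.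
Proof.
move=> c0; rewrite !limf_esupE; apply: le_ereal_inf_tmp => _ [V FV <-].
have FW : (\forall e \near 0%R^'+, V (e * c)%R) by apply: near0_scale.
apply: (@le_trans _ _ (ereal_sup ((fun e : R => g (e * c)%R) @` [set e : R | V (e * c)%R]))).
  by apply: ereal_inf_lbound; exists [set e : R | V (e * c)%R].
apply: ge_ereal_sup => _ [x /= Vx <-]; apply: ereal_sup_ubound; by exists (x * c)%R.
Qed.

Lemma einf_scale0 (g : R -> \bar R) (c : R) : (0 < c)%R ->
  limf_einf (fun e : R => g (e * c)%R) 0%R^'+ <= limf_einf g 0%R^'+.
Proof.
move=> c0; rewrite !limf_einfE; apply: ge_ereal_sup => _ [V FV <-].
have ci0 : (0 < c^-1)%R by rewrite invr_gt0.
have FW : (\forall e \near 0%R^'+, V (e * c^-1)%R) by apply: near0_scale.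
apply: (@le_trans _ _ (ereal_inf (g @` [set e : R | V (e * c^-1)%R]))); last first.
  by apply: ereal_sup_ubound; exists [set e : R | V (e * c^-1)%R].
apply: le_ereal_inf_tmp => _ [x /= Vx <-]; apply: ereal_inf_lbound.
exists (x * c^-1)%R => //=; by rewrite -mulrA mulVf ?mulr1 // gt_eqF.
Qed.

Lemma le_scale_lim (x y : \bar R) :
  (forall eta : R, (0 < eta)%R -> x <= (1 + eta)%:E * y) -> x <= y.
Proof.
move=> H; case: y H => [r| |] H.
- have [r0|r0] := leP r 0%R.
    apply: le_trans (H 1%R ltr01) _; rewrite -EFinM lee_fin.
    by rewrite mulrDl mul1r gerDl.
  apply/lee_addgt0Pr => e e0.
  apply: le_trans (H (e / r)%R (divr_gt0 e0 r0)) _.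
  rewrite -EFinM -EFinD lee_fin mulrDl mul1r -mulrA mulVf ?mulr1 //; by rewrite gt_eqF.
- by rewrite leey.
- by have := H 1%R ltr01; rewrite gt0_muleNy // lte_fin addr_gt0.
Qed.

Lemma esup_scale_a (g : R -> \bar R) (a : R -> R) (c : R) : (0 < c)%R ->
  (\forall e \near 0%R^'+, 0 <= g e) ->
  (forall eta : R, (0 < eta)%R -> \forall e \near 0%R^'+, (a e <= 1 + eta)%R) ->
  limf_esup (fun e : R => (a e)%:E * g (e * c)%R) 0%R^'+ <= limf_esup g 0%R^'+.
Proof.
move=> c0 g0 aH; apply: le_scale_lim => eta eta0.
have g0' := near0_scale (fun e => 0 <= g e) c c0 g0.
apply: (@le_trans _ _ (limf_esup (fun e : R => (1 + eta)%:E * g (e * c)%R) 0%R^'+)).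
  apply: limf_esup_le; near=> e.
  apply: lee_wpmul2r; first by near: e.
  by rewrite lee_fin; near: e; apply: aH.
rewrite limf_esupZ ?addr_gt0 //; apply: lee_wpmul2l; first by rewrite lee_fin addr_ge0 // ltW.
exact: esup_scale0.
Unshelve. all: end_near.
Qed.

Lemma einf_scale_a (g : R -> \bar R) (a : R -> R) (c : R) : (0 < c)%R ->
  (\forall e \near 0%R^'+, 0 <= g e) ->
  (forall eta : R, (0 < eta)%R -> \forall e \near 0%R^'+, (a e <= 1 + eta)%R) ->
  limf_einf (fun e : R => (a e)%:E * g (e * c)%R) 0%R^'+ <= limf_einf g 0%R^'+.
Proof.
move=> c0 g0 aH; apply: le_scale_lim => eta eta0.
have g0' := near0_scale (fun e => 0 <= g e) c c0 g0.
apply: (@le_trans _ _ (limf_einf (fun e : R => (1 + eta)%:E * g (e * c)%R) 0%R^'+)).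
  apply: limf_einf_le; near=> e.
  apply: lee_wpmul2r; first by near: e.
  by rewrite lee_fin; near: e; apply: aH.
rewrite limf_einfZ ?addr_gt0 //; apply: lee_wpmul2l; first by rewrite lee_fin addr_ge0 // ltW.
exact: einf_scale0.
Unshelve. all: end_near.
Qed.


Lemma fekete (f : R -> R) :
  (forall t, (0 <= t)%R -> (0 <= f t)%R) ->
  (forall t t', (0 <= t)%R -> (t <= t')%R -> (f t <= f t')%R) ->
  (forall t s, (0 <= t)%R -> (0 <= s)%R -> (f (t + s) <= f t + f s)%R) ->
  exists l : R, (fun t : R => f t / t)%R @ +oo%R --> l.
Proof.
move=> f0 fmono fsub; set S := [set (f t / t)%R | t in [set t : R | 0 < t]%R].
have S0 : S !=set0 by exists (f 1 / 1)%R, 1%R => //=.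
have Slb : has_lbound S by exists 0%R => _ [t /= t0 <-]; rewrite divr_ge0 // ?f0 // ltW.
exists (inf S); apply/cvgrPdist_lt => e e0.
have hlt : (inf S < inf S + e / 2)%R by rewrite ltrDl divr_gt0.
have [_ [T /= T0 <-] hT] := @inf_lt R S (inf S + e / 2)%R S0 hlt.
have C : forall k : nat, forall t, (0 <= t <= k.+1%:R * T)%R -> (f t <= k.+1%:R * f T)%R.
  elim=> [|k IH] t /andP[t0 tk].
    by rewrite mul1r; apply: fmono; rewrite // -(mul1r T).
  have [tT|tT] := leP t T.
    apply: le_trans (fmono _ _ t0 tT) _.
    by rewrite -[X in (X <= _)%R]mul1r ler_wpM2r ?f0 ?ltW // ltr1n.
  have -> : t = (T + (t - T))%R by rewrite addrC subrK.
  apply: le_trans (fsub _ _ (ltW T0) _) _; first by rewrite subr_ge0 ltW.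
  rewrite [X in (_ <= X)%R](_ : _ = f T + k.+1%:R * f T)%R; last first.
    by rewrite -natr1 mulrDl mul1r addrC.
  rewrite lerD2l; apply: IH; rewrite subr_ge0 ltW //=.
  by rewrite lerBlDl; move: tk; rewrite -natr1 mulrDl mul1r addrC.
have fT0 : (0 <= f T)%R by rewrite f0 // ltW.
have B : forall t, (0 < t)%R -> (f t / t <= f T / T + f T / t)%R.
  move=> t t0.
  have /andP[hk1 hk] := @truncn_itv R (t / T)%R (divr_ge0 (ltW t0) (ltW T0)).
  set k := Num.Def.trunc (t / T)%R in hk1 hk.
  have ftk : (f t <= k.+1%:R * f T)%R.
    apply: C; rewrite (ltW t0) /=; apply: ltW; by rewrite -ltr_pdivrMr.
  rewrite ler_pdivrMr //.
  have -> : ((f T / T + f T / t) * t = (t / T + 1) * f T)%R.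
    by field; rewrite gt_eqF //= gt_eqF.
  apply: le_trans ftk _; apply: ler_wpM2r => //.
  by rewrite -natr1 lerD2r.
exists (Num.max 1 (2 * f T / e))%R; split; first by rewrite num_real.
move=> t; rewrite gt_max => /andP[t1 te].
have t0 : (0 < t)%R by apply: lt_trans t1.
have lo : (inf S <= f t / t)%R by apply: (ge_inf Slb); exists t.
have hi := B t t0.
have sm : (f T / t < e / 2)%R.
  rewrite ltr_pdivrMr //; move: te; rewrite ltr_pdivrMr // => te.
  have -> : (e / 2 * t = (t * e) / 2)%R by rewrite mulrC mulrA.
  lra.
rewrite ltr_distlC; apply/andP; split; lra.
Qed.

End P1.

Section Flow.
Variables (R : realType) (X : Type) (d : X -> X -> R) (phi : X -> R -> X).
Hypotheses (hm : is_metric d) (hc : metric_compact d) (hf : is_flow d phi).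

Let I01 (t : R) := [set s : R | 0 <= s <= t].
Notation dist := (dist_t d phi).

Lemma d_refl x : d x x = 0.
Proof. by case: hm => h _ _; apply/h. Qed.
Lemma d_sym x y : d x y = d y x.
Proof. by case: hm. Qed.
Lemma d_tri x y z : d x z <= d x y + d y z.
Proof. by case: hm. Qed.
Lemma d_ge0 x y : 0 <= d x y.
Proof.
have := d_tri x y x; rewrite d_refl (d_sym y x) -mulr2n -mulr_natr.
by rewrite pmulr_lge0.
Qed.

Lemma ball_open x r : metric_open d [set y | d x y < r].
Proof.
rewrite /metric_open => y /= xy; exists (r - d x y); first by rewrite subr_gt0.
move=> z yz; apply: le_lt_trans (d_tri x y z) _; by rewrite -ltrBrDl.
Qed.

Lemma single_le_sum (n : nat) (F : 'I_n -> R) (i : 'I_n) :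
  (forall j, 0 <= F j) -> F i <= \sum_(j < n) F j.
Proof.
move=> F0; rewrite (bigD1 i) //= lerDl; apply: sumr_ge0 => j _; exact: F0.
Qed.

Lemma d_bounded : exists B : R, forall x y, d x y <= B.
Proof.
have cov : forall x, exists i, [set y | d i y < 1] x.
  by move=> x; exists x => /=; rewrite d_refl.
have [n [f H]] := @hc X (fun x => [set y | d x y < 1]) (fun x => ball_open x 1) cov.
exists (2 + \sum_(i < n) \sum_(j < n) d (f i) (f j)) => y z.
have [k yk] := H y; have [l zl] := H z; move: yk zl => /= yk zl.
have h1 : d (f k) (f l) <= \sum_(i < n) \sum_(j < n) d (f i) (f j).
  apply: (le_trans (@single_le_sum n (fun j => d (f k) (f j)) l _)); first by move=> j; exact: d_ge0.
  apply: (@single_le_sum n (fun i => \sum_(j < n) d (f i) (f j)) k).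
  by move=> i; apply: sumr_ge0 => ? _; exact: d_ge0.
have h2 := d_tri y (f k) z; have h3 := d_tri (f k) (f l) z.
rewrite (d_sym (f k) y) in yk.
lra.
Qed.

Lemma has_ub_dist t x y :
  has_ubound [set d (phi x s) (phi y s) | s in I01 t].
Proof. have [B HB] := d_bounded; exists B => _ [s _ <-]; exact: HB. Qed.

Lemma dist_ub t x y s : 0 <= s <= t -> d (phi x s) (phi y s) <= dist t x y.
Proof. move=> hs; rewrite /dist_t; apply: (ub_le_sup (has_ub_dist t x y)); by exists s. Qed.

Lemma dist_le t x y M : 0 <= t ->
  (forall s, 0 <= s <= t -> d (phi x s) (phi y s) <= M) -> dist t x y <= M.
Proof.
move=> t0 H; apply: ge_sup; first by exists (d (phi x 0) (phi y 0)); exists 0 => //=; rewrite lexx.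
by move=> _ [s hs <-]; apply: H.
Qed.

Lemma phi0 x : phi x 0 = x.
Proof. by case: hf. Qed.

Lemma d_le_dist t x y : 0 <= t -> d x y <= dist t x y.
Proof. by move=> t0; rewrite -{1}(phi0 x) -{1}(phi0 y); apply: dist_ub; rewrite lexx. Qed.

Lemma dist_ge0 t x y : 0 <= t -> 0 <= dist t x y.
Proof. move=> t0; exact: le_trans (d_ge0 x y) (d_le_dist t x y t0). Qed.

Lemma dist_refl t x : 0 <= t -> dist t x x = 0.
Proof.
move=> t0; apply/eqP; rewrite eq_le dist_ge0 // andbT.
by apply: dist_le => // s _; rewrite d_refl.
Qed.

Lemma dist_sym t x y : 0 <= t -> dist t x y = dist t y x.
Proof.
move=> t0; apply/eqP; rewrite eq_le; apply/andP; split; apply: dist_le => // s hs;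
  rewrite d_sym; exact: dist_ub.
Qed.

Lemma dist_tri t x y z : 0 <= t -> dist t x z <= dist t x y + dist t y z.
Proof.
move=> t0; apply: dist_le => // s hs.
apply: le_trans (d_tri _ (phi y s) _) _; apply: lerD; exact: dist_ub.
Qed.

Lemma dist_mono t t' x y : 0 <= t -> t <= t' -> dist t x y <= dist t' x y.
Proof.
move=> t0 tt; apply: dist_le => // s /andP[s0 st]; apply: dist_ub.
by rewrite s0 (le_trans st tt).
Qed.

Lemma dist_split t s x y : 0 <= t -> 0 <= s ->
  dist (t + s) x y <= Num.max (dist t x y) (dist s (phi x t) (phi y t)).
Proof.
move=> t0 s0; apply: dist_le; first exact: addr_ge0.
move=> r /andP[r0 rts]; rewrite le_max.
have [rt|rt] := leP r t.
  by rewrite dist_ub // r0 rt.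
apply/orP; right.
have -> : r = (r - t) + t by rewrite subrK.
case: hf => _ _ hfa; rewrite (hfa x (r - t) t) (hfa y (r - t) t); apply: dist_ub.
by rewrite subr_ge0 (ltW rt) /= lerBlDr addrC.
Qed.


Lemma phi_cont t x e : 0 < e ->
  exists2 del : R, 0 < del & forall y, d x y < del -> d (phi x t) (phi y t) < e.
Proof.
move=> e0; case: hf => hc' _ _; have [del del0 H] := hc' x t e e0.
exists del => // y xy; apply: H => //; by rewrite subrr normr0.
Qed.

Lemma dist_cont t y r : 0 <= t -> 0 < r ->
  exists2 del : R, 0 < del & forall z, d y z < del -> dist t y z <= r.
Proof.
move=> t0 r0.
have K := (compact_near_coveringP _).1 (@segment_compact R 0 t).
pose P := fun (del : R) (s : R) => forall z, d y z < del -> d (phi y s) (phi z s) < r.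
have hyp : forall s, `[0, t]%classic s -> \forall s' \near s & del \near 0^'+, P del s'.
  move=> s _; case: hf => hc' _ _.
  have r20 : 0 < r / 2 by rewrite divr_gt0.
  have [del del0 Hd] := hc' y s (r / 2) r20.
  exists ([set s' | `|s - s'| < del], [set dl | dl <= del]).
    split; first by apply/nbhs_ballP; exists del => //= s'; rewrite /ball /=.
    by apply/near0P; exists del => // e /andP[_ /ltW].
  case=> s' dl [/= ss' dld] z yz; rewrite /=.
  have h1 := Hd z s' (lt_le_trans yz dld) ss'.
  have h2 := Hd y s'; rewrite d_refl in h2; have {h2}h2 := h2 del0 ss'.
  have h3 := d_tri (phi y s') (phi y s) (phi z s'); rewrite d_sym in h2.
  lra.
have [del0 del00 H0] := (near0P R _).1 (K R 0^'+ P _ hyp).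
have hd : 0 < del0 / 2 < del0 by rewrite divr_gt0 //= ltr_pdivrMr // ltr_pMr // ltr1n.
exists (del0 / 2); first by case/andP: hd.
move=> z yz; apply: dist_le => // s hs; apply/ltW; apply: (H0 _ hd) => //.
Qed.

Lemma dball_open t x r : 0 <= t -> metric_open d [set z | dist t x z < r].
Proof.
move=> t0 z /= xz.
have rho0 : 0 < (r - dist t x z) / 2 by rewrite divr_gt0 // subr_gt0.
have [del del0 H] := dist_cont t z _ t0 rho0.
exists del => // w zw; have := H w zw; have := dist_tri t x z w t0.
lra.
Qed.


Definition cov t eps n := exists U : 'I_n -> set X,
  [/\ forall i, metric_open d (U i), forall x, exists i, U i x &
      forall i, (diam_t d phi t (U i) < eps%:E)%E].
Definition spn t eps n := exists E : 'I_n -> X, forall x, exists i, dist t x (E i) < eps.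
Definition sepr t eps n := exists F : 'I_n -> X,
  injective F /\ forall i j, i != j -> eps <= dist t (F i) (F j).

Lemma diam_le t (U : set X) M :
  (forall y z, U y -> U z -> dist t y z <= M) -> (diam_t d phi t U <= M%:E)%E.
Proof.
move=> H; apply: ge_ereal_sup => _ [y [z [Uy Uz ->]]]; rewrite lee_fin; exact: H.
Qed.

Lemma dist_le_diam t (U : set X) y z : U y -> U z ->
  ((dist t y z)%:E <= diam_t d phi t U)%E.
Proof. by move=> Uy Uz; apply: ereal_sup_ubound; exists y, z. Qed.

Lemma spn_exists t eps : 0 <= t -> 0 < eps -> exists n, spn t eps n.
Proof.
move=> t0 e0.
have cv : forall x, exists i, [set z | dist t i z < eps] x.
  by move=> x; exists x => /=; rewrite dist_refl.
have [n [f H]] := @hc X (fun x => [set z | dist t x z < eps]) (fun x => dball_open t x eps t0) cv.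
exists n, f => x; have [k hk] := H x; exists k; by rewrite dist_sym.
Qed.

Lemma cov_of_spn t eps n : 0 <= t -> 0 < eps -> spn t (eps / 3) n -> cov t eps n.
Proof.
move=> t0 e0 [E HE].
exists (fun i => [set z | dist t (E i) z < eps / 3]); split.
- move=> i; exact: dball_open.
- move=> x; have [i hi] := HE x; exists i => /=; by rewrite dist_sym.
- move=> i; apply: (@le_lt_trans _ _ (2 * eps / 3)%:E).
    apply: diam_le => y z /= hy hz; have h := dist_tri t y (E i) z t0.
    rewrite (dist_sym t y (E i) t0) in h; lra.
  rewrite lte_fin; lra.
Qed.

Lemma sep_le_cov t eps n m : sepr t eps n -> cov t eps m -> (n <= m)%N.
Proof.
move=> [F [Finj HF]] [U [_ Ucov Udiam]].
pose k i := projT1 (cid (Ucov (F i))).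
have hk i : U (k i) (F i) by rewrite /k; case: cid.
have kinj : injective k.
  move=> i j kij; apply/eqP; apply: contraT => ij.
  have h1 := HF i j ij; have := hk j; rewrite -kij => hj.
  have h2 := le_lt_trans (dist_le_diam t (U (k i)) (F i) (F j) (hk i) hj) (Udiam (k i)).
  by move: h2; rewrite lte_fin ltNge h1.
by have := leq_card k kinj; rewrite !card_ord.
Qed.

Lemma spn_of_maxsep t eps n : 0 <= t -> 0 < eps -> sepr t eps n ->
  (forall m, sepr t eps m -> (m <= n)%N) -> spn t eps n.
Proof.
move=> t0 e0 [F [Finj HF]] Hmax; exists F => x.
case: (pselect (exists i, dist t x (F i) < eps)) => // hx; exfalso.
have hxF : forall i, eps <= dist t x (F i).
  move=> i; rewrite leNgt; apply/negP => h; apply: hx; by exists i.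
pose F' (i : 'I_n.+1) := if unlift ord_max i is Some j then F j else x.
have F'l j : F' (lift ord_max j) = F j by rewrite /F' liftK.
have F'n : F' ord_max = x by rewrite /F' unlift_none.
suff : sepr t eps n.+1 by move/Hmax; rewrite ltnn.
exists F'; split.
- move=> i1 i2; case: (unliftP ord_max i1) => [j1 ->|->]; case: (unliftP ord_max i2) => [j2 ->|->] //;
    rewrite ?F'l ?F'n.
  + by move/Finj ->.
  + move=> h; have := hxF j1; rewrite h dist_refl // leNgt e0 //.
  + move=> h; have := hxF j2; rewrite h dist_refl // leNgt e0 //.
- move=> i1 i2; case: (unliftP ord_max i1) => [j1 ->|->]; case: (unliftP ord_max i2) => [j2 ->|->];
    rewrite ?F'l ?F'n ?eqxx //.
  + by rewrite (inj_eq (@lift_inj _ _)); exact: HF.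
  + by rewrite dist_sym.
Qed.

Lemma cov_fin t eps (T : finType) (U : T -> set X) :
  (forall i, metric_open d (U i)) -> (forall x, exists i, U i x) ->
  (forall i, (diam_t d phi t (U i) < eps%:E)%E) -> cov t eps #|T|.
Proof.
move=> Uo Uc Ud; exists (fun k => U (enum_val k)); split => //.
move=> x; have [i hi] := Uc x; exists (enum_rank i); by rewrite enum_rankK.
Qed.


Lemma cov_mul t s eps m n : 0 <= t -> 0 <= s ->
  cov t eps m -> cov s eps n -> cov (t + s) eps (m * n).
Proof.
move=> t0 s0 [U [Uo Uc Ud]] [V [Vo Vc Vd]].
have -> : (m * n)%N = #|{: 'I_m * 'I_n}| by rewrite card_prod !card_ord.
apply: (@cov_fin (t + s) eps _ (fun p => U p.1 `&` [set x | V p.2 (phi x t)])).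
- move=> [i j] x /= [Ux Vx].
  have [r1 r10 H1] := Uo i x Ux; have [r2 r20 H2] := Vo j (phi x t) Vx.
  have [del del0 H3] := phi_cont t x r2 r20.
  exists (Num.min r1 del); first by rewrite lt_min r10 del0.
  move=> y; rewrite lt_min => /andP[h1 h2]; split; first exact: H1.
  by apply: H2; apply: H3.
- move=> x; have [i hi] := Uc x; have [j hj] := Vc (phi x t); by exists (i, j).
- move=> [i j] /=.
  apply: (@le_lt_trans _ _ (Order.max (diam_t d phi t (U i)) (diam_t d phi s (V j)))); last first.
    by rewrite gt_max Ud Vd.
  apply: ge_ereal_sup => _ [y [z [[Uy Vy] [Uz Vz] ->]]].
  have := dist_split t s y z t0 s0; rewrite le_max => /orP[h|h]; rewrite le_max; apply/orP.
  + left; apply: (le_trans _ (dist_le_diam t _ _ _ Uy Uz)); by rewrite lee_fin.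
  + right; apply: (le_trans _ (dist_le_diam s (V j) (phi y t) (phi z t) Vy Vz)); by rewrite lee_fin.
Qed.

Lemma cov_mono t t' eps n : 0 <= t -> t <= t' -> cov t' eps n -> cov t eps n.
Proof.
move=> t0 tt [U [Uo Uc Ud]]; exists U; split => // i.
apply: le_lt_trans (Ud i); apply: ge_ereal_sup => _ [y [z [Uy Uz ->]]].
apply: (le_trans _ (dist_le_diam t' _ _ _ Uy Uz)); rewrite lee_fin; exact: dist_mono.
Qed.


Lemma inf_nat (P : nat -> Prop) n0 : P n0 ->
  exists n, [/\ P n, (forall m, P m -> (n <= m)%N) & inf [set x%:R | x in P] = n%:R :> R].
Proof.
move=> Pn0; have [n [Pn nmin]] := @nat_has_minimum P (ex_intro _ n0 Pn0).
exists n; split => //; apply/eqP; rewrite eq_le; apply/andP; split.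
  apply: (ge_inf _); last by exists n.
  by exists 0 => _ [m _ <-]; rewrite ler0n.
apply: lb_le_inf; first by exists n%:R, n.
by move=> _ [m Pm <-]; rewrite ler_nat; exact: nmin.
Qed.

Lemma sup_nat (P : nat -> Prop) n0 B : P n0 -> (forall m, P m -> (m <= B)%N) ->
  exists n, [/\ P n, (forall m, P m -> (m <= n)%N) & sup [set x%:R | x in P] = n%:R :> R].
Proof.
move=> Pn0 PB.
have exP : exists i, (fun k => `[< P k >]) i by exists n0; apply/asboolP.
have ubP : forall i, (fun k => `[< P k >]) i -> (i <= B)%N by move=> i /asboolP; exact: PB.
case: (ex_maxnP exP ubP) => n /asboolP Pn nmax.
exists n; split => //; first by move=> m Pm; apply: nmax; apply/asboolP.
apply/eqP; rewrite eq_le; apply/andP; split.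
  apply: ge_sup; first by exists n%:R, n.
  by move=> _ [m Pm <-]; rewrite ler_nat; apply: nmax; apply/asboolP.
apply: (ub_le_sup _); last by exists n.
by exists B%:R => _ [m Pm <-]; rewrite ler_nat; exact: PB.
Qed.

Lemma cover_numE t eps : 0 <= t -> 0 < eps -> exists n,
  [/\ cov t eps n, (forall m, cov t eps m -> (n <= m)%N) & cover_num d phi t eps = n%:R].
Proof.
move=> t0 e0; have e30 : 0 < eps / 3 by rewrite divr_gt0.
have [n0 hn0] := spn_exists t (eps / 3) t0 e30.
exact: (inf_nat _ _ (cov_of_spn t eps n0 t0 e0 hn0)).
Qed.

Lemma span_numE t eps : 0 <= t -> 0 < eps -> exists n,
  [/\ spn t eps n, (forall m, spn t eps m -> (n <= m)%N) & span_num d phi t eps = n%:R].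
Proof.
move=> t0 e0; have [n0 hn0] := spn_exists t eps t0 e0.
exact: (inf_nat _ _ hn0).
Qed.

Lemma sep_numE t eps : 0 <= t -> 0 < eps -> exists n,
  [/\ sepr t eps n, (forall m, sepr t eps m -> (m <= n)%N) & sep_num d phi t eps = n%:R].
Proof.
move=> t0 e0; have [B [hB _ _]] := cover_numE t eps t0 e0.
have s0 : sepr t eps 0.
  exists (fun i : 'I_0 => False_rect X (Bool.diff_false_true (ltn_ord i))); split; by move=> [].
exact: (sup_nat _ _ _ s0 (fun m hm => sep_le_cov t eps m B hm hB)).
Qed.


Lemma chain (x0 : X) t eps : 0 <= t -> 0 < eps ->
  [/\ 1 <= span_num d phi t eps, span_num d phi t eps <= sep_num d phi t eps,
      sep_num d phi t eps <= cover_num d phi t eps &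
      cover_num d phi t eps <= span_num d phi t (eps / 3)].
Proof.
move=> t0 e0; have e30 : 0 < eps / 3 by rewrite divr_gt0.
have [K [hK Kmin ->]] := span_numE t eps t0 e0.
have [N [hN Nmax ->]] := sep_numE t eps t0 e0.
have [M [hM Mmin ->]] := cover_numE t eps t0 e0.
have [K' [hK' _ ->]] := span_numE t (eps / 3) t0 e30.
split; rewrite ?ler_nat.
- rewrite ler1n; case: K hK Kmin => [|K] // hK0 _; case: hK0 => E HE; case: (HE x0) => i; by case: i.
- apply: Kmin; exact: spn_of_maxsep.
- exact: sep_le_cov hN hM.
- apply: Mmin; exact: cov_of_spn.
Qed.

Lemma cover_sub t s eps : 0 <= t -> 0 <= s -> 0 < eps ->
  cover_num d phi (t + s) eps <= cover_num d phi t eps * cover_num d phi s eps.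
Proof.
move=> t0 s0 e0; have ts0 : 0 <= t + s by rewrite addr_ge0.
have [M [hM _ ->]] := cover_numE t eps t0 e0.
have [N [hN _ ->]] := cover_numE s eps s0 e0.
have [P [_ Pmin ->]] := cover_numE (t + s) eps ts0 e0.
rewrite -natrM ler_nat; apply: Pmin; exact: cov_mul.
Qed.

Lemma cover_mono t t' eps : 0 <= t -> t <= t' -> 0 < eps ->
  cover_num d phi t eps <= cover_num d phi t' eps.
Proof.
move=> t0 tt e0; have t'0 : 0 <= t' by apply: le_trans tt.
have [M [_ Mmin ->]] := cover_numE t eps t0 e0.
have [N [hN _ ->]] := cover_numE t' eps t'0 e0.
rewrite ler_nat; apply: Mmin; exact: cov_mono hN.
Qed.

Lemma empty_nums t eps : ~ (exists x : X, True) ->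
  [/\ cover_num d phi t eps = 0, sep_num d phi t eps = 0 & span_num d phi t eps = 0].
Proof.
move=> nX.
have nX' : forall x : X, False by move=> x; apply: nX; exists x.
split.
- have c0 : cov t eps 0.
    exists (fun _ => set0); split => //; by move=> [].
  have [n [_ nmin e]] := inf_nat _ _ c0.
  have -> : cover_num d phi t eps = n%:R := e.
  by have := nmin 0 c0; rewrite leqn0 => /eqP ->.
- have s0 : sepr t eps 0.
    exists (fun i : 'I_0 => False_rect X (Bool.diff_false_true (ltn_ord i))); split; by move=> [].
  have sb : forall m, sepr t eps m -> (m <= 0)%N.
    by move=> [|m] // [F _]; case: (nX' (F ord0)).
  have [n [sn _ e]] := sup_nat _ _ _ s0 sb.
  have -> : sep_num d phi t eps = n%:R := e.
  by have := sb n sn; rewrite leqn0 => /eqP ->.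
- have c0 : spn t eps 0.
    exists (fun i : 'I_0 => False_rect X (Bool.diff_false_true (ltn_ord i))) => x; case: (nX' x).
  have [n [_ nmin e]] := inf_nat _ _ c0.
  have -> : span_num d phi t eps = n%:R := e.
  by have := nmin 0 c0; rewrite leqn0 => /eqP ->.
Qed.

End Flow.


Section Main.
Variable R : realType.

Lemma esup_cst0 (F : set_system R) (FF : ProperFilter F) :
  limf_esup (fun _ : R => (0:R)%:E) F = 0%E.
Proof. exact: (limf_esup_cvg R F FF (fun _ => 0) 0 (cvg_cst _)). Qed.

Lemma einf_cst0 (F : set_system R) (FF : ProperFilter F) :
  limf_einf (fun _ : R => (0:R)%:E) F = 0%E.
Proof.
rewrite /limf_einf; have -> : (\- (fun _ : R => (0:R)%:E))%E = (fun _ : R => (0:R)%:E).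
  by apply: funext => x /=; rewrite ?oppe0 ?oppr0 ?EFinN ?oppr0.
by rewrite esup_cst0 ?oppe0.
Qed.

Lemma ln_le (x y : R) : 0 < x -> x <= y -> ln x <= ln y.
Proof. by move=> x0 xy; rewrite ler_ln // posrE // (lt_le_trans x0 xy). Qed.

Lemma near_pinfty_gt0 : \forall t \near (+oo : set_system R), 0 < t.
Proof. by exists 0; split; rewrite ?num_real. Qed.

Lemma near_pos_le (f g : R -> \bar R) :
  (forall t, 0 < t -> (f t <= g t)%E) -> \forall t \near (+oo : set_system R), (f t <= g t)%E.
Proof. by move=> H; exists 0; split; rewrite ?num_real // => t; exact: H. Qed.

End Main.

Theorem proposition2p3 (R : realType) (X : Type) (d : X -> X -> R)
    (phi : X -> R -> X) :
  is_metric d -> metric_compact d -> is_flow d phi ->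
  [/\ (forall eps : R, 0 < eps -> exists l : R,
         (fun t : R => ln (cover_num d phi t eps) / t) @ +oo --> l),
      upper_mdim_M d phi =
        limf_esup (fun eps : R =>
          (lim ((fun t : R => ln (cover_num d phi t eps) / (t * ln (1 / eps)))
                  @ +oo))%:E) 0^'+,
      upper_mdim_M d phi =
        limf_esup (fun eps : R =>
          limf_esup (fun t : R =>
            (ln (sep_num d phi t eps) / (t * ln (1 / eps)))%:E) +oo) 0^'+,
      lower_mdim_M d phi =
        limf_einf (fun eps : R =>
          (lim ((fun t : R => ln (cover_num d phi t eps) / (t * ln (1 / eps)))
                  @ +oo))%:E) 0^'+ &
      lower_mdim_M d phi =
        limf_einf (fun eps : R =>
          limf_esup (fun t : R =>
            (ln (sep_num d phi t eps) / (t * ln (1 / eps)))%:E) +oo) 0^'+].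
Proof.
move=> hm hc hf.
case: (pselect (exists x : X, True)) => [[x0 _]|nX]; last first.
  have E := fun t eps => empty_nums R X d phi t eps nX.
  have C0 t eps : cover_num d phi t eps = 0 by case: (E t eps).
  have S0 t eps : sep_num d phi t eps = 0 by case: (E t eps).
  have P0 t eps : span_num d phi t eps = 0 by case: (E t eps).
  have Z1 : forall eps, (fun t : R => ln (cover_num d phi t eps) / t) = (fun _ => 0).
    by move=> eps; apply: funext => t; rewrite C0 ln0 // mul0r.
  have Z2 : forall eps, (fun t : R => ln (cover_num d phi t eps) / (t * ln (1 / eps))) = (fun _ => 0).
    by move=> eps; apply: funext => t; rewrite C0 ln0 // mul0r.
  have Z3 : forall eps, (fun t : R => (ln (sep_num d phi t eps) / (t * ln (1 / eps)))%:E) = (fun _ => (0:R)%:E).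
    by move=> eps; apply: funext => t; rewrite S0 ln0 // mul0r.
  have Z4 : forall eps, span_rate d phi eps = 0%E.
    move=> eps; rewrite /span_rate.
    have -> : (fun t : R => (ln (span_num d phi t eps) / t)%:E) = (fun _ => (0:R)%:E).
      by apply: funext => t; rewrite P0 ln0 // mul0r.
    exact: esup_cst0.
  have Z5 : (fun eps : R => (span_rate d phi eps * (ln (1 / eps))^-1%:E)%E) = (fun _ => (0:R)%:E).
    by apply: funext => eps; rewrite Z4 mul0e.
  have Z6 : (fun eps : R => (lim ((fun t : R => ln (cover_num d phi t eps) / (t * ln (1 / eps))) @ +oo))%:E) = (fun _ => (0:R)%:E).
    by apply: funext => eps; rewrite Z2 lim_cst.
  have Z7 : (fun eps : R => limf_esup (fun t : R => (ln (sep_num d phi t eps) / (t * ln (1 / eps)))%:E) +oo) = (fun _ => (0:R)%:E).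
    by apply: funext => eps; rewrite Z3 esup_cst0.
  rewrite /upper_mdim_M /lower_mdim_M Z5 Z6 Z7 !esup_cst0 !einf_cst0; split => //.
  by move=> eps _; exists 0; rewrite Z1; exact: cvg_cst.
have CH t e : 0 <= t -> 0 < e -> _ := chain R X d phi hm hc hf x0 t e.
have pos t e : 0 <= t -> 0 < e -> [/\ 0 < span_num d phi t e, 0 < sep_num d phi t e &
   0 < cover_num d phi t e].
  move=> t0 e0; case: (CH t e t0 e0) => h1 h2 h3 _.
  have p1 : 0 < span_num d phi t e by apply: lt_le_trans h1.
  have p2 := lt_le_trans p1 h2; split => //; exact: lt_le_trans h3.
have lnle t e : 0 <= t -> 0 < e -> [/\ 0 <= ln (span_num d phi t e),
   ln (span_num d phi t e) <= ln (sep_num d phi t e),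
   ln (sep_num d phi t e) <= ln (cover_num d phi t e) &
   ln (cover_num d phi t e) <= ln (span_num d phi t (e / 3))].
  move=> t0 e0; case: (CH t e t0 e0) => h1 h2 h3 h4; case: (pos t e t0 e0) => p1 p2 p3.
  split; [exact: ln_ge0 | exact: ln_le | exact: ln_le | exact: ln_le].
have conj1 : forall eps : R, 0 < eps -> exists l : R,
    (fun t : R => ln (cover_num d phi t eps) / t) @ +oo --> l.
  move=> eps e0; apply: fekete.
  - move=> t t0; case: (lnle t eps t0 e0) => a b c _.
    exact: le_trans (le_trans a b) c.
  - move=> t t' t0 tt; apply: ln_le; first by case: (pos t eps t0 e0).
    exact: cover_mono.
  - move=> t u t0 u0; case: (pos t eps t0 e0) => _ _ p1; case: (pos u eps u0 e0) => _ _ p2.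
    rewrite -lnM ?posrE //; apply: ln_le; last exact: cover_sub.
    by case: (pos (t + u) eps (addr_ge0 t0 u0) e0).
have cvgc : forall eps, 0 < eps -> (fun t : R => ln (cover_num d phi t eps) / t) @ +oo -->
    lim ((fun t : R => ln (cover_num d phi t eps) / t) @ +oo).
  move=> eps e0; have [l hl] := conj1 eps e0; by rewrite (cvg_lim (@Rhausdorff R) hl).
pose c := fun eps : R => lim ((fun t : R => ln (cover_num d phi t eps) / t) @ +oo).
pose s := fun eps : R => limf_esup (fun t : R => (ln (sep_num d phi t eps) / t)%:E) +oo.
have hA eps : 0 < eps -> (span_rate d phi eps <= s eps)%E.
  move=> e0; apply: limf_esup_le; apply: near_pos_le => t t0.
  rewrite lee_fin ler_pM2r ?invr_gt0 //; by case: (lnle t eps (ltW t0) e0).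
have hB eps : 0 < eps -> (s eps <= (c eps)%:E)%E.
  move=> e0; rewrite -(limf_esup_cvg R +oo _ _ _ (cvgc eps e0)).
  apply: limf_esup_le; apply: near_pos_le => t t0.
  rewrite lee_fin ler_pM2r ?invr_gt0 //; by case: (lnle t eps (ltW t0) e0).
have hC eps : 0 < eps -> ((c eps)%:E <= span_rate d phi (eps / 3))%E.
  move=> e0; rewrite -(limf_esup_cvg R +oo _ _ _ (cvgc eps e0)).
  apply: limf_esup_le; apply: near_pos_le => t t0.
  rewrite lee_fin ler_pM2r ?invr_gt0 //; by case: (lnle t eps (ltW t0) e0).
have hD eps : 0 < eps -> (0 <= span_rate d phi eps)%E.
  move=> e0; rewrite -(esup_cst0 R +oo _).
  apply: limf_esup_le; apply: near_pos_le => t t0.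
  rewrite lee_fin divr_ge0 ?(ltW t0) //; by case: (lnle t eps (ltW t0) e0).
have bpos (e : R) : 0 < e < 1 -> 0 < ln (1 / e).
  by case/andP=> e0 e1; rewrite div1r; apply: ln_gt0; rewrite invf_gt1.
have e3 (e : R) : 0 < e < 1 -> 0 < e * 3^-1 < 1.
  case/andP=> e0 e1; apply/andP; split; first by rewrite mulr_gt0 // invr_gt0 ltr0n.
  apply: le_lt_trans e1; rewrite ger_pMr //; have h3 : (3^-1 : R) <= 1 by rewrite invf_le1 // ler1n.
  exact: h3.
have Heq (e : R) : 0 < e < 1 ->
    (lim ((fun t : R => ln (cover_num d phi t e) / (t * ln (1 / e))) @ +oo))%:E =
    (c e * (ln (1 / e))^-1)%:E.
  move=> he; have e0 : 0 < e by case/andP: he.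
  have -> : (fun t : R => ln (cover_num d phi t e) / (t * ln (1 / e))) =
      (fun t : R => ln (cover_num d phi t e) / t * (ln (1 / e))^-1).
    by apply: funext => t; rewrite invfM mulrA.
  congr (_%:E); apply: (cvg_lim (@Rhausdorff R)); exact: cvgMl (cvgc e e0).
have Qeq (e : R) : 0 < e < 1 ->
    limf_esup (fun t : R => (ln (sep_num d phi t e) / (t * ln (1 / e)))%:E) +oo =
    ((ln (1 / e))^-1%:E * s e)%E.
  move=> he; rewrite -limf_esupZ ?invr_gt0 ?bpos //; congr limf_esup.
  by apply: funext => t; rewrite -EFinM invfM; congr (_%:E); ring.
pose G := fun eps : R => (span_rate d phi eps * (ln (1 / eps))^-1%:E)%E.
pose H := fun eps : R => (lim ((fun t : R => ln (cover_num d phi t eps) / (t * ln (1 / eps))) @ +oo))%:E.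
pose Q := fun eps : R => limf_esup (fun t : R => (ln (sep_num d phi t eps) / (t * ln (1 / eps)))%:E) +oo.
pose a := fun e : R => ln (1 / (e * 3^-1)) / ln (1 / e).
have GQ (e : R) : 0 < e < 1 -> (G e <= Q e)%E.
  move=> he; have e0 : 0 < e by case/andP: he.
  rewrite /G /Q Qeq // muleC; apply: lee_wpmul2l; last exact: hA.
  by rewrite lee_fin invr_ge0 ltW // bpos.
have QH (e : R) : 0 < e < 1 -> (Q e <= H e)%E.
  move=> he; have e0 : 0 < e by case/andP: he.
  rewrite /H /Q Qeq // Heq // EFinM muleC; apply: lee_wpmul2r; last exact: hB.
  by rewrite lee_fin invr_ge0 ltW // bpos.
have HG (e : R) : 0 < e < 1 -> (H e <= (a e)%:E * G (e * 3^-1)%R)%E.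
  move=> he; have e0 : 0 < e by case/andP: he.
  have b30 := bpos _ (e3 e he); have b0 := bpos e he.
  rewrite /H /G Heq // muleCA -EFinM.
  have -> : a e * (ln (1 / (e * 3^-1)))^-1 = (ln (1 / e))^-1.
    rewrite /a mulrAC mulfV; [exact: mul1r | apply/negP => /eqP h; move: b30; by rewrite h ltxx].
  rewrite EFinM; apply: lee_wpmul2r; last exact: hC.
  by rewrite lee_fin invr_ge0 ltW.
have n01 : \forall e \near (0:R)^'+, 0 < e < 1.
  apply: (near0P R (fun e : R => 0 < e < 1)).2; by exists 1.
have Gpos : \forall e \near 0^'+, (0 <= G e)%E.
  move: n01; apply: filterS => e he; have e0 : 0 < e by case/andP: he.
  by apply: mule_ge0; [exact: hD | rewrite lee_fin invr_ge0 ltW // bpos].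
have abound : forall eta : R, 0 < eta -> \forall e \near 0^'+, a e <= 1 + eta.
  move=> eta eta0; apply: (near0P R (fun e : R => a e <= 1 + eta)).2.
  pose k := expR (ln 3 / eta).
  have k0 : 0 < k by apply: expR_gt0.
  exists (Num.min 1 k^-1); first by rewrite lt_min ltr01 invr_gt0.
  move=> e /andP[e0]; rewrite lt_min => /andP[e1 ek].
  have he : 0 < e < 1 by rewrite e0 e1.
  have b0 := bpos e he.
  rewrite /a ler_pdivrMr //.
  have -> : 1 / (e * 3^-1) = 3 * (1 / e) by rewrite !div1r invfM invrK mulrC.
  rewrite lnM ?posrE ?ltr0n ?div1r ?invr_gt0 //.
  rewrite div1r in b0.
  have ke : k < e^-1.
    by rewrite -(invrK k) ltf_pV2 ?posrE ?invr_gt0.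
  have kb : ln 3 / eta < ln e^-1.
    by rewrite -(expRK (ln 3 / eta)) ltr_ln ?posrE ?invr_gt0.
  move: kb; rewrite ltr_pdivrMr // => kb.
  rewrite mulrDl mul1r addrC lerD2l mulrC; exact: ltW.
have c30 : (0:R) < 3^-1 by rewrite invr_gt0 ltr0n.
have HleG : (limf_esup H 0^'+ <= limf_esup G 0^'+)%E.
  apply: le_trans (esup_scale_a R G a (3^-1) c30 Gpos abound).
  apply: limf_esup_le; move: n01; apply: filterS => e he; exact: HG.
have HleG' : (limf_einf H 0^'+ <= limf_einf G 0^'+)%E.
  apply: le_trans (einf_scale_a R G a (3^-1) c30 Gpos abound).
  apply: limf_einf_le; move: n01; apply: filterS => e he; exact: HG.
have GleQ : (limf_esup G 0^'+ <= limf_esup Q 0^'+)%E.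
  apply: limf_esup_le; move: n01; apply: filterS => e he; exact: GQ.
have GleQ' : (limf_einf G 0^'+ <= limf_einf Q 0^'+)%E.
  apply: limf_einf_le; move: n01; apply: filterS => e he; exact: GQ.
have QleH : (limf_esup Q 0^'+ <= limf_esup H 0^'+)%E.
  apply: limf_esup_le; move: n01; apply: filterS => e he; exact: QH.
have QleH' : (limf_einf Q 0^'+ <= limf_einf H 0^'+)%E.
  apply: limf_einf_le; move: n01; apply: filterS => e he; exact: QH.
split => //.
- apply/eqP; rewrite eq_le HleG andbT; exact: le_trans GleQ QleH.
- apply/eqP; rewrite eq_le GleQ /=; exact: le_trans QleH HleG.
- apply/eqP; rewrite eq_le HleG' andbT; exact: le_trans GleQ' QleH'.
- apply/eqP; rewrite eq_le GleQ' /=; exact: le_trans QleH' HleG'.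
Qed.
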